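(* Let $\mathcal D[t]\subset\mathcal H\subset\mathcal D^\times[t^\times]$ be a rigged Hilbert space with $\mathcal D[t]$ reflexive, and take $(X,\mu)=(\mathbb N,\gamma)$ with $\gamma$ the counting measure. Let $\omega:n\in\mathbb N\mapsto\omega_n\in\mathcal D^\times$ be a bounded Bessel distribution map (resp. a distribution frame). Then for each $n$ the conjugate linear functional $\omega_n$ is bounded with respect to the norm of $\mathcal H$, hence $\omega_n\in\mathcal H$, and $\{\omega_n\}_{n\in\mathbb N}$ is a Bessel sequence (resp. a frame) of $\mathcal H$, i.e. $\sum_n|\langle f,\omega_n\rangle|^2\le B\|f\|^2$ (resp. $A\|f\|^2\le\sum_n|\langle f,\omega_n\rangle|^2\le B\|f\|^2$) for all $f\in\mathcal H$, with the same bounds.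
   Context: A rigged Hilbert space $\mathcal D[t]\subset\mathcal H\subset\mathcal D^\times[t^\times]$: $\mathcal H$ is a Hilbert space with inner product $\langle\cdot,\cdot\rangle$ and norm $\|\cdot\|$; $\mathcal D$ is a dense subspace of $\mathcal H$ with a locally convex topology $t$ finer than the norm topology; $\mathcal D^\times$ is the space of continuous conjugate linear functionals on $\mathcal D[t]$ with the strong dual topology; $\mathcal H$ is identified with a subspace of $\mathcal D^\times$, and the duality pairing between $\mathcal D^\times$ and $\mathcal D$, also written $\langle\cdot,\cdot\rangle$, extends the inner product; $\langle f,F\rangle:=\overline{\langle F,f\rangle}$ for $f\in\mathcal D$, $F\in\mathcal D^\times$. A map $\omega:X\to\mathcal D^\times$ is weakly measurable if $x\mapsto\langle f,\omega_x\rangle$ is $\mu$-measurable for each $f\in\mathcal D$. It is a bounded Bessel distribution map if there is $B>0$ with $\int_X|\langle f,\omega_x\rangle|^2d\mu\le B\|f\|^2$ for all $f\in\mathcal D$; it is a distribution frame if additionally there is $A>0$ with $A\|f\|^2\le\int_X|\langle f,\omega_x\rangle|^2d\mu$ for all $f\in\mathcal D$. *)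

(* Defs.v *)
From Stdlib Require Import Reals List.
Open Scope R_scope.

Set Implicit Arguments.

Record Cx := mkC { re : R; im : R }.
Definition C0 : Cx := mkC 0 0.
Definition Cadd (a b : Cx) : Cx := mkC (re a + re b) (im a + im b).
Definition Cmul (a b : Cx) : Cx :=
  mkC (re a * re b - im a * im b) (re a * im b + im a * re b).
Definition Copp (a : Cx) : Cx := mkC (- re a) (- im a).
Definition Cconj (a : Cx) : Cx := mkC (re a) (- im a).
Definition Cmod (a : Cx) : R := sqrt (re a * re a + im a * im a).

(* inner product linear in the first argument, conjugate linear in the second *)
Record HilbertSpace := {
  hcar :> Type;
  hzero : hcar;
  hadd : hcar -> hcar -> hcar;
  hopp : hcar -> hcar;
  hscal : Cx -> hcar -> hcar;
  inner : hcar -> hcar -> Cx;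
  hadd_assoc : forall x y z, hadd x (hadd y z) = hadd (hadd x y) z;
  hadd_comm : forall x y, hadd x y = hadd y x;
  hadd_zero : forall x, hadd x hzero = x;
  hadd_opp : forall x, hadd x (hopp x) = hzero;
  hscal_one : forall x, hscal (mkC 1 0) x = x;
  hscal_assoc : forall a b x, hscal a (hscal b x) = hscal (Cmul a b) x;
  hscal_distr_v : forall a x y, hscal a (hadd x y) = hadd (hscal a x) (hscal a y);
  hscal_distr_s : forall a b x, hscal (Cadd a b) x = hadd (hscal a x) (hscal b x);
  inner_lin : forall a x y z,
      inner (hadd (hscal a x) y) z = Cadd (Cmul a (inner x z)) (inner y z);
  inner_sym : forall x y, inner y x = Cconj (inner x y);
  inner_real : forall x, im (inner x x) = 0;
  inner_pos : forall x, 0 <= re (inner x x);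
  inner_def : forall x, re (inner x x) = 0 -> x = hzero;
  hcomplete : forall u : nat -> hcar,
      (forall eps, 0 < eps -> exists N, forall m n, (N <= m)%nat -> (N <= n)%nat ->
          sqrt (re (inner (hadd (u m) (hopp (u n))) (hadd (u m) (hopp (u n))))) < eps) ->
      exists x, forall eps, 0 < eps -> exists N, forall n, (N <= n)%nat ->
          sqrt (re (inner (hadd (u n) (hopp x)) (hadd (u n) (hopp x)))) < eps
}.

Definition hnorm (H : HilbertSpace) (x : H) : R := sqrt (re (inner H x x)).
Definition hsub (H : HilbertSpace) (x y : H) : H := hadd H x (hopp H y).
Arguments hnorm {H} x.
Arguments hsub {H} x y.

(* D is a dense subspace of H, carrying the locally convex topology t
   generated by the family of seminorms (sn i)_{i : idx}; t is finer than the
   norm topology, i.e. the identity D[t] -> H is continuous. *)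
Record RiggedHilbertSpace (H : HilbertSpace) := {
  dom : H -> Prop;
  dom_zero : dom (hzero H);
  dom_add : forall f g, dom f -> dom g -> dom (hadd H f g);
  dom_scal : forall a f, dom f -> dom (hscal H a f);
  dom_dense : forall (x : H) eps, 0 < eps -> exists f, dom f /\ hnorm (hsub x f) < eps;
  idx : Type;
  sn : idx -> H -> R;
  sn_nonneg : forall i f, dom f -> 0 <= sn i f;
  sn_triangle : forall i f g, dom f -> dom g -> sn i (hadd H f g) <= sn i f + sn i g;
  sn_homog : forall i a f, dom f -> sn i (hscal H a f) = Cmod a * sn i f;
  t_finer : exists (F : list idx) (c : R), 0 < c /\
      forall f : H, dom f -> hnorm f <= c * fold_right (fun i m => Rmax (sn i f) m) 0 F
}.

Arguments dom {H} r _.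
Arguments sn {H} r _ _.

Definition maxsn (H : HilbertSpace) (D : RiggedHilbertSpace H) (F : list (idx D))
  (f : H) : R := fold_right (fun i m => Rmax (sn D i f) m) 0 F.

(* D^x : continuous conjugate linear functionals on D[t].  An element is
   represented by a function H -> Cx; only its values on D matter.  The pairing
   <F, f> is F f, and <f, F> = Cconj (F f). *)
Definition in_Dx (H : HilbertSpace) (D : RiggedHilbertSpace H) (phi : H -> Cx) : Prop :=
  (forall a b f g, dom D f -> dom D g ->
     phi (hadd H (hscal H a f) (hscal H b g)) =
     Cadd (Cmul (Cconj a) (phi f)) (Cmul (Cconj b) (phi g))) /\
  (exists (F : list (idx D)) (c : R), 0 <= c /\
     forall f, dom D f -> Cmod (phi f) <= c * maxsn D F f).

Definition bounded_D (H : HilbertSpace) (D : RiggedHilbertSpace H) (M : H -> Prop) : Prop :=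
  (forall f, M f -> dom D f) /\
  (forall i, exists c, forall f, M f -> sn D i f <= c).

(* bounded subsets of D^x for the strong dual topology beta(D^x, D), whose
   seminorms are q_M(phi) = sup_{f in M} |phi f|, M bounded in D *)
Definition bounded_Dx (H : HilbertSpace) (D : RiggedHilbertSpace H)
  (S : (H -> Cx) -> Prop) : Prop :=
  (forall phi, S phi -> in_Dx D phi) /\
  (forall M, bounded_D D M -> exists c, forall phi f, S phi -> M f -> Cmod (phi f) <= c).

(* Continuity: |Psi phi| <= c * q_M(phi) for some bounded M (finite unions of
   bounded sets are bounded); q_M(phi) <= s is written with its definition. *)
Definition in_Dxx (H : HilbertSpace) (D : RiggedHilbertSpace H)
  (Psi : (H -> Cx) -> Cx) : Prop :=
  (forall a b phi psi, in_Dx D phi -> in_Dx D psi ->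
     Psi (fun f => Cadd (Cmul a (phi f)) (Cmul b (psi f))) =
     Cadd (Cmul (Cconj a) (Psi phi)) (Cmul (Cconj b) (Psi psi))) /\
  (exists M c, bounded_D D M /\ 0 <= c /\
     forall phi s, in_Dx D phi -> 0 <= s -> (forall f, M f -> Cmod (phi f) <= s) ->
       Cmod (Psi phi) <= c * s).

(* D[t] reflexive: the canonical map J : D -> D^xx, (J f)(phi) = conj(phi f),
   is onto and is a topological isomorphism of D[t] onto D^xx with its strong
   topology beta(D^xx, D^x) (seminorms sup_{phi in S} |(J f) phi|, S strongly
   bounded in D^x). *)
Definition reflexive (H : HilbertSpace) (D : RiggedHilbertSpace H) : Prop :=
  (* J is onto D^xx *)
  (forall Psi, in_Dxx D Psi ->
     exists f, dom D f /\ forall phi, in_Dx D phi -> Psi phi = Cconj (phi f)) /\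
  (* J is continuous *)
  (forall S, bounded_Dx D S -> exists (F : list (idx D)) c, 0 <= c /\
     forall phi f, S phi -> dom D f -> Cmod (phi f) <= c * maxsn D F f) /\
  (* J^{-1} is continuous *)
  (forall i, exists S c, bounded_Dx D S /\ 0 <= c /\
     forall f s, dom D f -> 0 <= s -> (forall phi, S phi -> Cmod (phi f) <= s) ->
       sn D i f <= c * s).

Definition psum (u : nat -> R) (N : nat) : R := fold_right Rplus 0 (map u (seq 0 N)).

(* sum_n u n <= b  for nonnegative u (value in [0, +oo]) *)
Definition sum_le (u : nat -> R) (b : R) : Prop := forall N, psum u N <= b.
(* a <= sum_n u n  for nonnegative u (sum = sup of partial sums) *)
Definition le_sum (a : R) (u : nat -> R) : Prop :=
  forall eps, 0 < eps -> exists N, a - eps <= psum u N.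

Definition bounded_Bessel_map (H : HilbertSpace) (D : RiggedHilbertSpace H)
  (omega : nat -> H -> Cx) (B : R) : Prop :=
  (forall n, in_Dx D (omega n)) /\ 0 < B /\
  forall f, dom D f -> sum_le (fun n => Cmod (Cconj (omega n f)) ^ 2) (B * hnorm f ^ 2).

Definition distribution_frame (H : HilbertSpace) (D : RiggedHilbertSpace H)
  (omega : nat -> H -> Cx) (A B : R) : Prop :=
  bounded_Bessel_map D omega B /\ 0 < A /\
  forall f, dom D f -> le_sum (A * hnorm f ^ 2) (fun n => Cmod (Cconj (omega n f)) ^ 2).

Definition Bessel_seq (H : HilbertSpace) (h : nat -> H) (B : R) : Prop :=
  0 < B /\ forall f : H, sum_le (fun n => Cmod (inner H f (h n)) ^ 2) (B * hnorm f ^ 2).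

Arguments Bessel_seq {H} h B.
Definition frame_seq (H : HilbertSpace) (h : nat -> H) (A B : R) : Prop :=
  Bessel_seq h B /\ 0 < A /\
  forall f : H, le_sum (A * hnorm f ^ 2) (fun n => Cmod (inner H f (h n)) ^ 2).

(* omega_n is the functional induced by h_n in H (H embedded in D^x via
   h |-> <h, .>), and omega_n is bounded w.r.t. the norm of H *)
Arguments frame_seq {H} h A B.
Definition represented_in_H (H : HilbertSpace) (D : RiggedHilbertSpace H)
  (omega : nat -> H -> Cx) (h : nat -> H) : Prop :=
  forall n, (exists c, forall f, dom D f -> Cmod (omega n f) <= c * hnorm f) /\
            (forall f, dom D f -> omega n f = inner H (h n) f).

(* Main.v *)
Require Import Defs.
From Stdlib Require Import Reals List Lra Psatz ClassicalEpsilon Classical.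
Open Scope R_scope.

Lemma Cx_eq (a b : Cx) : re a = re b -> im a = im b -> a = b.
Proof. destruct a, b; simpl; intros -> ->; reflexivity. Qed.

Definition q {H : HilbertSpace} (x : H) := re (inner H x x).

Lemma inner_zero_l (H : HilbertSpace) (z : H) : inner H (hzero H) z = C0.
Proof.
  pose proof (inner_lin H (mkC 1 0) (hzero H) (hzero H) z) as E.
  rewrite hscal_one, hadd_zero in E.
  pose proof (f_equal re E) as E1; pose proof (f_equal im E) as E2; simpl in E1, E2.
  apply Cx_eq; unfold C0; simpl; lra.
Qed.

Lemma inner_add_l (H : HilbertSpace) (x y z : H) :
  inner H (hadd H x y) z = Cadd (inner H x z) (inner H y z).
Proof.
  pose proof (inner_lin H (mkC 1 0) x y z) as E. rewrite hscal_one in E. rewrite E.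
  apply Cx_eq; simpl; ring.
Qed.

Lemma inner_scal_l (H : HilbertSpace) a (x z : H) :
  inner H (hscal H a x) z = Cmul a (inner H x z).
Proof.
  pose proof (inner_lin H a x (hzero H) z) as E. rewrite hadd_zero, inner_zero_l in E. rewrite E.
  apply Cx_eq; simpl; ring.
Qed.

Lemma inner_opp_l (H : HilbertSpace) (x z : H) :
  inner H (hopp H x) z = Copp (inner H x z).
Proof.
  pose proof (inner_add_l H x (hopp H x) z) as E. rewrite hadd_opp, inner_zero_l in E.
  pose proof (f_equal re E) as E1; pose proof (f_equal im E) as E2; simpl in E1, E2.
  apply Cx_eq; simpl; lra.
Qed.

Lemma re_sym (H : HilbertSpace) (x y : H) : re (inner H y x) = re (inner H x y).
Proof. rewrite inner_sym. reflexivity. Qed.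
Lemma im_sym (H : HilbertSpace) (x y : H) : im (inner H y x) = - im (inner H x y).
Proof. rewrite inner_sym. reflexivity. Qed.

Lemma re_add_l (H : HilbertSpace) (x y z : H) : re (inner H (hadd H x y) z) = re (inner H x z) + re (inner H y z).
Proof. rewrite inner_add_l; reflexivity. Qed.
Lemma im_add_l (H : HilbertSpace) (x y z : H) : im (inner H (hadd H x y) z) = im (inner H x z) + im (inner H y z).
Proof. rewrite inner_add_l; reflexivity. Qed.
Lemma re_scal_l (H : HilbertSpace) a (x z : H) : re (inner H (hscal H a x) z) = re a * re (inner H x z) - im a * im (inner H x z).
Proof. rewrite inner_scal_l; reflexivity. Qed.
Lemma im_scal_l (H : HilbertSpace) a (x z : H) : im (inner H (hscal H a x) z) = re a * im (inner H x z) + im a * re (inner H x z).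
Proof. rewrite inner_scal_l; reflexivity. Qed.
Lemma re_opp_l (H : HilbertSpace) (x z : H) : re (inner H (hopp H x) z) = - re (inner H x z).
Proof. rewrite inner_opp_l; reflexivity. Qed.
Lemma im_opp_l (H : HilbertSpace) (x z : H) : im (inner H (hopp H x) z) = - im (inner H x z).
Proof. rewrite inner_opp_l; reflexivity. Qed.
Lemma re_add_r (H : HilbertSpace) (x y z : H) : re (inner H z (hadd H x y)) = re (inner H z x) + re (inner H z y).
Proof. rewrite !(re_sym H _ z). apply re_add_l. Qed.
Lemma im_add_r (H : HilbertSpace) (x y z : H) : im (inner H z (hadd H x y)) = im (inner H z x) + im (inner H z y).
Proof. rewrite !(im_sym H _ z), im_add_l. ring. Qed.
Lemma re_scal_r (H : HilbertSpace) a (x z : H) : re (inner H z (hscal H a x)) = re a * re (inner H z x) + im a * im (inner H z x).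
Proof. rewrite (re_sym H _ z), re_scal_l, (re_sym H x z), (im_sym H z x). ring. Qed.
Lemma im_scal_r (H : HilbertSpace) a (x z : H) : im (inner H z (hscal H a x)) = re a * im (inner H z x) - im a * re (inner H z x).
Proof. rewrite (im_sym H _ z), im_scal_l, (re_sym H x z), (im_sym H z x). ring. Qed.
Lemma re_opp_r (H : HilbertSpace) (x z : H) : re (inner H z (hopp H x)) = - re (inner H z x).
Proof. rewrite !(re_sym H _ z). apply re_opp_l. Qed.
Lemma im_opp_r (H : HilbertSpace) (x z : H) : im (inner H z (hopp H x)) = - im (inner H z x).
Proof. rewrite !(im_sym H _ z), im_opp_l. ring. Qed.

Global Hint Rewrite re_add_l im_add_l re_scal_l im_scal_l re_opp_l im_opp_l
  re_add_r im_add_r re_scal_r im_scal_r re_opp_r im_opp_r : inn.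

Ltac expand := unfold q, hsub in *; autorewrite with inn in *; simpl re in *; simpl im in *.

Definition sq (z : Cx) := re z * re z + im z * im z.

Lemma q_nonneg (H : HilbertSpace) (x : H) : 0 <= q x.
Proof. apply inner_pos. Qed.

Lemma CS (H : HilbertSpace) (x y : H) : sq (inner H x y) <= q x * q y.
Proof.
  unfold sq.
  destruct (Req_dec (q y) 0) as [Hy|Hy].
  - apply inner_def in Hy. subst y. rewrite (inner_sym H (hzero H) x), inner_zero_l.
    simpl. unfold q at 2. rewrite inner_zero_l. simpl. lra.
  - assert (Hyp : 0 < q y) by (pose proof (q_nonneg H y); lra).
    set (zr := re (inner H x y)). set (zi := im (inner H x y)).
    set (t := / q y).
    pose proof (inner_pos H (hadd H x (hscal H (mkC (- t * zr) (- t * zi)) y))) as P.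
    expand. rewrite (re_sym H x y), (im_sym H x y) in P.
    pose proof (inner_real H y) as Ry.
    fold zr zi in P. rewrite Ry in P.
    assert (T : t * re (inner H y y) = 1) by (unfold t, q; apply Rinv_l; unfold q in Hy; lra).
    unfold q in T, Hyp |- *.
    set (a := re (inner H x x)) in *. set (c := re (inner H y y)) in *.
    assert (E : a + (- t * zr * zr - - t * zi * - zi) +
    (- t * zr * zr + - t * zi * zi +
     (- t * zr * (- t * zr * c - - t * zi * 0) +
      - t * zi * (- t * zr * 0 + - t * zi * c))) = a - t * (zr*zr+zi*zi) * (2 - t * c)) by ring.
    rewrite E, T in P.
    assert (0 <= c * (a - t * (zr * zr + zi * zi))) by (apply Rmult_le_pos; lra).
    assert (E2 : c * (a - t * (zr * zr + zi * zi)) = a * c - (t * c) * (zr*zr+zi*zi)) by ring.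
    rewrite E2, T in H0. lra.
Qed.

Lemma re_CS (H : HilbertSpace) (x y : H) : re (inner H x y) * re (inner H x y) <= q x * q y.
Proof. pose proof (CS H x y). unfold sq in H0. nra. Qed.

Lemma amgm r a b eta : r * r <= a * b -> 0 <= a -> 0 <= b -> 0 < eta -> 2 * r <= eta * a + b / eta.
Proof.
  intros. set (u := eta * a). set (v := b / eta).
  assert (Hv : 0 <= v) by (unfold v; unfold Rdiv; apply Rmult_le_pos; [lra|left; apply Rinv_0_lt_compat; lra]).
  assert (Hu : 0 <= u) by (unfold u; nra).
  assert (Huv : u * v = a * b) by (unfold u, v; field; lra).
  assert (Q0 : 0 <= (u - v) * (u - v)) by apply Rle_0_sqr.
  assert (S : 4 * (r * r) <= (u + v) * (u + v)) by lra.
  destruct (Rle_dec (2 * r) (u + v)); [lra|].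
  assert ((u+v)*(u+v) < (2*r)*(2*r)) by (apply Rmult_le_0_lt_compat; lra). lra.
Qed.

Lemma q_add_le (H : HilbertSpace) (x y : H) eta : 0 < eta ->
  q (hadd H x y) <= (1 + eta) * q x + (1 + / eta) * q y.
Proof.
  intros He. pose proof (re_CS H x y) as C. pose proof (q_nonneg H x); pose proof (q_nonneg H y).
  pose proof (amgm _ _ _ eta C H0 H1 He).
  unfold q in *. autorewrite with inn. rewrite (re_sym H x y).
  unfold Rdiv in H2. lra.
Qed.

Lemma sq_add_le z w eta : 0 < eta ->
  sq (Cadd z w) <= (1 + eta) * sq z + (1 + / eta) * sq w.
Proof.
  intros He. unfold sq; simpl.
  assert (2*(re z*re w + im z*im w) <= eta*(re z*re z+im z*im z) + (re w*re w+im w*im w)/eta).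
  { apply amgm; try nra.
    assert (E : (re z * re z + im z * im z) * (re w * re w + im w * im w) - (re z * re w + im z * im w) * (re z * re w + im z * im w) = (re z * im w - im z * re w) * (re z * im w - im z * re w)) by ring.
    pose proof (Rle_0_sqr (re z * im w - im z * re w)) as HH. unfold Rsqr in HH. lra. }
  unfold Rdiv in H. nra.
Qed.

Lemma psum_S u N : psum u (S N) = psum u N + u N.
Proof.
  unfold psum. rewrite seq_S, map_app, fold_right_app. simpl.
  generalize (u N). induction (map u (seq 0 N)) as [|x l IH]; intros c; simpl.
  - ring.
  - rewrite IH. ring.
Qed.

Lemma psum_0 u : psum u 0 = 0.
Proof. reflexivity. Qed.

Lemma psum_le u v N : (forall n, (n < N)%nat -> u n <= v n) -> psum u N <= psum v N.
Proof.
  induction N; intros Hle. { rewrite !psum_0; lra. }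
  rewrite !psum_S. assert (u N <= v N) by (apply Hle; lia).
  assert (psum u N <= psum v N) by (apply IHN; intros; apply Hle; lia). lra.
Qed.

Lemma psum_lin a b u v N : psum (fun n => a * u n + b * v n) N = a * psum u N + b * psum v N.
Proof. induction N. { rewrite !psum_0; ring. } rewrite !psum_S, IHN. ring. Qed.

Lemma psum_nonneg u N : (forall n, 0 <= u n) -> 0 <= psum u N.
Proof. intros. induction N. { rewrite psum_0; lra. } rewrite psum_S. specialize (H N). lra. Qed.

Lemma term_le_psum u n : (forall n, 0 <= u n) -> u n <= psum u (S n).
Proof. intros. rewrite psum_S. pose proof (psum_nonneg u n H). lra. Qed.

Lemma lim_delta F X Y : 0 <= Y -> (forall d, 0 < d -> d <= 1 -> F <= X + Y * d) -> F <= X.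
Proof.
  intros HY Hd. destruct (Rle_dec F X) as [|Hn]; [lra|].
  set (d := Rmin 1 ((F - X) / (2 * (Y + 1)))).
  assert (Hd0 : 0 < d). { unfold d. apply Rmin_pos; [lra|]. apply Rdiv_lt_0_compat; lra. }
  assert (Hd1 : d <= 1) by apply Rmin_l.
  assert (Hd2 : d <= (F - X) / (2 * (Y + 1))) by apply Rmin_r.
  specialize (Hd d Hd0 Hd1).
  assert (Y * d <= (Y+1) * ((F - X) / (2 * (Y + 1)))) by nra.
  assert ((Y+1) * ((F - X) / (2 * (Y + 1))) = (F - X)/2) by (field; lra).
  lra.
Qed.

Lemma Cmod_sq z : Cmod z ^ 2 = sq z.
Proof.
  unfold Cmod, sq. simpl. rewrite Rmult_1_r. apply sqrt_sqrt. nra.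
Qed.

Lemma sq_conj z : sq (Cconj z) = sq z.
Proof. unfold sq; simpl; ring. Qed.

Lemma hnorm_sq (H : HilbertSpace) (x : H) : hnorm x ^ 2 = q x.
Proof. unfold hnorm, q. simpl. rewrite Rmult_1_r. apply sqrt_sqrt. apply inner_pos. Qed.

Lemma dense_q (H : HilbertSpace) (D : RiggedHilbertSpace H) (x : H) d : 0 < d ->
  exists g, dom D g /\ q (hsub x g) < d.
Proof.
  intros Hd. destruct (dom_dense D x (sqrt_lt_R0 _ Hd)) as [g [Hg Hn]].
  exists g; split; auto. rewrite <- hnorm_sq.
  assert (0 <= hnorm (hsub x g)) by apply sqrt_pos.
  assert (sqrt d * sqrt d = d) by (apply sqrt_sqrt; lra). nra.
Qed.

Lemma key_real d Q k e : d <> 0 -> 0 <= Q -> 0 < k ->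
  (forall t, 0 <= k + 2 * t * (d + e) + t * t * Q) -> e * e < d * d / 16 ->
  k < d * d / (2 * (Q + 1)) -> False.
Proof.
  intros Hd HQ Hk Ht He Hkk.
  set (s := / (Q + 1)).
  assert (Hs : 0 < s) by (unfold s; apply Rinv_0_lt_compat; lra).
  assert (HsQ : s * Q <= 1) by (unfold s; apply (Rmult_le_reg_l (Q+1)); [lra|]; field_simplify; lra).
  specialize (Ht (- d * s)).
  assert (Hd2 : 0 < d * d) by (apply Rsqr_pos_lt; auto).
  assert (A1 : d * s * (d * s) * Q <= s * (d * d)).
  { assert (E : d * s * (d * s) * Q = (s * Q) * (s * (d * d))) by ring. rewrite E.
    assert (0 < s * (d*d)) by (apply Rmult_lt_0_compat; auto). nra. }
  assert (A2 : - (d * e) <= d * d / 4).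
  { destruct (Rle_dec (- (d * e)) (d * d / 4)); auto.
    assert ((d*d/4) * (d*d/4) < (-(d*e)) * (-(d*e))) by (apply Rmult_le_0_lt_compat; lra).
    assert (E : (-(d*e)) * (-(d*e)) = (d*d) * (e*e)) by ring.
    assert ((d*d) * (e*e) < (d*d) * (d*d/16)) by (apply Rmult_lt_compat_l; auto).
    nra. }
  assert (Hkk' : k < s * (d * d) / 2) by (unfold s; unfold Rdiv in *; rewrite Rinv_mult in Hkk; nra).
  assert (E : k + 2 * (- d * s) * (d + e) + - d * s * (- d * s) * Q =
              k - 2 * s * (d * d) + 2 * s * (- (d * e)) + d * s * (d * s) * Q) by ring.
  rewrite E in Ht.
  assert (2 * s * (- (d * e)) <= 2 * s * (d * d / 4)) by (apply Rmult_le_compat_l; lra).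
  lra.
Qed.

Definition clin (H : HilbertSpace) (D : RiggedHilbertSpace H) (phi : H -> Cx) :=
  forall a b f g, dom D f -> dom D g ->
     phi (hadd H (hscal H a f) (hscal H b g)) =
     Cadd (Cmul (Cconj a) (phi f)) (Cmul (Cconj b) (phi g)).

Lemma clin_scal H D phi a f : @clin H D phi -> dom D f -> phi (hscal H a f) = Cmul (Cconj a) (phi f).
Proof.
  intros L Hf. pose proof (L a C0 f f Hf Hf) as E.
  rewrite <- hscal_distr_s in E.
  replace (Cadd a C0) with a in E by (apply Cx_eq; unfold C0; simpl; ring).
  rewrite E. apply Cx_eq; unfold C0; simpl; ring.
Qed.

Lemma clin_add H D phi f g : @clin H D phi -> dom D f -> dom D g -> phi (hadd H f g) = Cadd (phi f) (phi g).
Proof.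
  intros L Hf Hg. pose proof (L (mkC 1 0) (mkC 1 0) f g Hf Hg) as E.
  rewrite !hscal_one in E. rewrite E. apply Cx_eq; simpl; ring.
Qed.

Lemma archi e : 0 < e -> exists N, (0 < N)%nat /\ forall n, (N <= n)%nat -> / INR (S n) < e.
Proof.
  intros He. destruct (archimed_cor1 e He) as [N [HN HN0]]. exists N. split; auto.
  intros n Hn. eapply Rle_lt_trans; [|exact HN].
  apply Rinv_le_contravar. { apply lt_0_INR; auto. } apply le_INR. lia.
Qed.

Lemma riesz (H : HilbertSpace) (D : RiggedHilbertSpace H) (phi : H -> Cx) (c : R) :
  clin H D phi -> 0 <= c -> (forall f, dom D f -> sq (phi f) <= c * q f) ->
  exists h, forall f, dom D f -> phi f = inner H h f.
Proof.
  intros L Hc Hb.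
  set (J := fun x => q x - 2 * re (phi x)).
  assert (Jlow : forall x, dom D x -> - c <= J x).
  { intros x Hx. unfold J. pose proof (Hb x Hx) as Bx. unfold sq in Bx.
    assert (R1 : re (phi x) * re (phi x) <= q x * c) by nra.
    pose proof (amgm _ _ _ 1 R1 (q_nonneg H x) Hc Rlt_0_1). unfold Rdiv in H0. rewrite Rinv_1 in H0. lra. }
  set (E := fun r => exists x, dom D x /\ r = - J x).
  assert (EB : bound E) by (exists c; intros r [x [Hx ->]]; specialize (Jlow x Hx); lra).
  assert (EN : exists r, E r) by (exists (- J (hzero H)); exists (hzero H); split; auto; apply dom_zero).
  destruct (completeness E EB EN) as [Lb [Lub1 Lub2]].
  set (m0 := - Lb).
  assert (Jm : forall x, dom D x -> m0 <= J x).
  { intros x Hx. assert (E (- J x)) by (exists x; auto). specialize (Lub1 _ H0). unfold m0; lra. }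
  assert (Jex : forall k : nat, exists x, dom D x /\ J x <= m0 + / INR (S k)).
  { intros k. apply Classical_Prop.NNPP. intros Hn.
    assert (Hk : 0 < / INR (S k)) by (apply Rinv_0_lt_compat, lt_0_INR; lia).
    assert (is_upper_bound E (Lb - / INR (S k))).
    { intros r [x [Hx ->]]. destruct (Rle_dec (- J x) (Lb - / INR (S k))); auto.
      exfalso; apply Hn; exists x; split; auto; unfold m0; lra. }
    specialize (Lub2 _ H0). lra. }
  set (xs := fun k => proj1_sig (constructive_indefinite_description _ (Jex k))).
  assert (Hxs : forall k, dom D (xs k) /\ J (xs k) <= m0 + / INR (S k)).
  { intros k. unfold xs. destruct constructive_indefinite_description; auto. }
  assert (Mid : forall x y, dom D x -> dom D y ->
     J x + J y - 2 * J (hscal H (mkC (/2) 0) (hadd H x y)) = q (hsub x y) / 2).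
  { intros x y Hx Hy. unfold J.
    rewrite (clin_scal _ _ _ _ _ L (dom_add D _ _ Hx Hy)), (clin_add _ _ _ _ _ L Hx Hy).
    expand. rewrite (re_sym H x y), (im_sym H x y). field. }
  assert (Cau : forall k l, q (hsub (xs k) (xs l)) <= 2 * (/ INR (S k) + / INR (S l))).
  { intros k l. destruct (Hxs k) as [Dk Jk]. destruct (Hxs l) as [Dl Jl].
    pose proof (Mid _ _ Dk Dl) as M.
    pose proof (Jm _ (dom_scal D (mkC (/2) 0) _ (dom_add D _ _ Dk Dl))). lra. }
  destruct (hcomplete H xs) as [h Hh].
  { intros eps Heps.
    assert (He2 : 0 < eps * eps / 4) by (unfold Rdiv; apply Rmult_lt_0_compat; nra).
    destruct (archi _ He2) as [N [HN0 HN]]. exists N. intros m n Hm Hn.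
    pose proof (Cau m n) as Cmn. specialize (HN m Hm) as Hm'. specialize (HN n Hn) as Hn'.
    fold (hsub (xs m) (xs n)). fold (q (hsub (xs m) (xs n))).
    set (Q := q (hsub (xs m) (xs n))) in *.
    assert (HQ : 0 <= Q) by apply q_nonneg.
    pose proof (sqrt_pos Q). pose proof (sqrt_sqrt Q HQ).
    destruct (Rlt_dec (sqrt Q) eps); auto. nra. }
  assert (Conv : forall d, 0 < d -> exists N, forall n, (N <= n)%nat -> q (hsub (xs n) h) < d).
  { intros d Hd. destruct (Hh (sqrt d) (sqrt_lt_R0 _ Hd)) as [N HN]. exists N. intros n Hn.
    specialize (HN n Hn). fold (hsub (xs n) h) in HN. fold (q (hsub (xs n) h)) in HN.
    pose proof (sqrt_sqrt _ (q_nonneg H (hsub (xs n) h))). pose proof (sqrt_sqrt d (Rlt_le _ _ Hd)).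
    pose proof (sqrt_pos (q (hsub (xs n) h))). nra. }
  assert (ReP : forall f, dom D f -> re (inner H h f) = re (phi f)).
  { intros f Hf. destruct (Req_dec (re (inner H h f) - re (phi f)) 0) as [|Hd]; [lra|exfalso].
    set (d := re (inner H h f) - re (phi f)) in *.
    assert (Key : forall k t, 0 <= / INR (S k) + 2 * t * (d + re (inner H (hsub (xs k) h) f)) + t * t * q f).
    { intros k t. destruct (Hxs k) as [Dk Jk].
      pose proof (Jm _ (dom_add D _ _ Dk (dom_scal D (mkC t 0) _ Hf))) as Jt.
      unfold J in Jt, Jk.
      rewrite (clin_add _ _ _ _ _ L Dk (dom_scal D (mkC t 0) _ Hf)), (clin_scal _ _ _ _ _ L Hf) in Jt.
      unfold d. expand. rewrite (re_sym H (xs k) f) in Jt. rewrite (inner_real H f) in Jt. simpl in Jt. nra. }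
    assert (Hd2 : 0 < d * d) by (apply Rsqr_pos_lt; auto).
    pose proof (q_nonneg H f) as Hqf.
    assert (P1 : 0 < d * d / (16 * (q f + 1))) by (apply Rdiv_lt_0_compat; lra).
    assert (P2 : 0 < d * d / (2 * (q f + 1))) by (apply Rdiv_lt_0_compat; lra).
    destruct (Conv _ P1) as [N1 HN1]. destruct (archi _ P2) as [N2 [_ HN2]].
    set (k := Nat.max N1 N2).
    specialize (HN1 k (Nat.le_max_l _ _)). specialize (HN2 k (Nat.le_max_r _ _)).
    pose proof (re_CS H (hsub (xs k) h) f) as CSk.
    set (e := re (inner H (hsub (xs k) h) f)) in *.
    set (Qk := q (hsub (xs k) h)) in *.
    assert (HQk : 0 <= Qk) by apply q_nonneg.
    assert (Hee : e * e < d * d / 16).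
    { assert (Qk * q f <= Qk * (q f + 1)) by nra.
      assert (Qk * (q f + 1) < d * d / (16 * (q f + 1)) * (q f + 1)) by (apply Rmult_lt_compat_r; lra).
      assert (d * d / (16 * (q f + 1)) * (q f + 1) = d * d / 16) by (field; lra). lra. }
    apply (key_real d (q f) (/ INR (S k)) e); auto.
    all: try (apply Rinv_0_lt_compat, lt_0_INR; lia).
    all: try (intros t; apply Key). }
  exists h. intros f Hf. apply Cx_eq.
  - symmetry; apply ReP; auto.
  - pose proof (ReP _ (dom_scal D (mkC 0 1) _ Hf)) as R2.
    rewrite (clin_scal _ _ _ _ _ L Hf) in R2. expand. lra.
Qed.

Definition FF (H : HilbertSpace) (hs : nat -> H) (f : H) N := psum (fun n => sq (inner H f (hs n))) N.

Lemma FF_shift (H : HilbertSpace) hs (f g : H) eta N : 0 < eta ->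
  FF H hs f N <= (1 + eta) * FF H hs g N + (1 + / eta) * FF H hs (hsub f g) N.
Proof.
  intros He. unfold FF. rewrite <- psum_lin. apply psum_le. intros n _.
  replace (inner H f (hs n)) with (Cadd (inner H g (hs n)) (inner H (hsub f g) (hs n))).
  - apply sq_add_le; auto.
  - apply Cx_eq; simpl; expand; ring.
Qed.

Lemma q_sub_le (H : HilbertSpace) (x y : H) eta : 0 < eta ->
  q y <= (1 + eta) * q x + (1 + / eta) * q (hsub x y).
Proof.
  intros He. pose proof (q_add_le H x (hopp H (hsub x y)) eta He) as P.
  replace (q (hadd H x (hopp H (hsub x y)))) with (q y) in P.
  - replace (q (hopp H (hsub x y))) with (q (hsub x y)) in P; auto. expand. ring.
  - expand. rewrite (re_sym H x y). ring.
Qed.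

Lemma q_hsub_sym (H : HilbertSpace) (x y : H) : q (hsub x y) = q (hsub y x).
Proof. expand. rewrite (re_sym H x y). ring. Qed.

Lemma FF_le_q (H : HilbertSpace) hs (f : H) N : FF H hs f N <= q f * psum (fun n => q (hs n)) N.
Proof.
  unfold FF. rewrite <- (Rplus_0_r (q f * _)).
  replace (q f * psum (fun n : nat => q (hs n)) N + 0) with (psum (fun n => q f * q (hs n) + 0 * 0) N)
    by (rewrite psum_lin; ring).
  apply psum_le. intros n _. pose proof (CS H f (hs n)). lra.
Qed.

Lemma bessel_ext (H : HilbertSpace) (D : RiggedHilbertSpace H) hs B : 0 <= B ->
  (forall g, dom D g -> forall N, FF H hs g N <= B * q g) -> forall f N, FF H hs f N <= B * q f.
Proof.
  intros HB Hg f N.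
  set (C := psum (fun n => q (hs n)) N).
  assert (HC : 0 <= C) by (apply psum_nonneg; intros; apply q_nonneg).
  pose proof (q_nonneg H f) as Hqf.
  assert (Step : forall eta, 0 < eta -> eta <= 1 -> FF H hs f N <= B * q f + 3 * B * q f * eta).
  { intros eta He He1.
    assert (Hie : 0 < / eta) by (apply Rinv_0_lt_compat; auto).
    apply (lim_delta _ _ ((1 + / eta) * ((1 + eta) * B + C))).
    { apply Rmult_le_pos; nra. }
    intros d Hd Hd1. destruct (dense_q H D f d Hd) as [g [Dg Qg]].
    pose proof (FF_shift H hs f g eta N He) as S1.
    pose proof (Hg g Dg N) as S2.
    pose proof (q_sub_le H f g eta He) as S3.
    pose proof (FF_le_q H hs (hsub f g) N) as S4. fold C in S4.
    pose proof (q_nonneg H (hsub f g)) as Q0.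
    assert (T1 : FF H hs (hsub f g) N <= d * C) by (eapply Rle_trans; [exact S4|]; apply Rmult_le_compat_r; lra).
    assert (T2 : B * q g <= B * ((1 + eta) * q f + (1 + / eta) * d)).
    { apply Rmult_le_compat_l; auto. eapply Rle_trans; [exact S3|].
      apply Rplus_le_compat_l, Rmult_le_compat_l; lra. }
    assert (T3 : (1 + eta) * FF H hs g N <= (1 + eta) * (B * ((1 + eta) * q f + (1 + / eta) * d))) by (apply Rmult_le_compat_l; lra).
    assert (T4 : (1 + / eta) * FF H hs (hsub f g) N <= (1 + / eta) * (d * C)) by (apply Rmult_le_compat_l; lra).
    assert (T5 : (1+eta) * (1+eta) * B * q f <= B * q f + 3 * B * q f * eta).
    { assert (Bq : 0 <= B * q f) by nra. assert (eta * eta <= eta) by nra.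
      assert (E1 : (1+eta) * (1+eta) * B * q f = B * q f + (2 * eta + eta * eta) * (B * q f)) by ring.
      assert ((2 * eta + eta * eta) * (B * q f) <= (3 * eta) * (B * q f)) by (apply Rmult_le_compat_r; lra).
      lra. }
    assert (E2 : (1 + eta) * (B * ((1 + eta) * q f + (1 + / eta) * d)) + (1 + / eta) * (d * C)
      = (1+eta) * (1+eta) * B * q f + (1 + / eta) * ((1 + eta) * B + C) * d) by ring.
    lra. }
  apply (lim_delta _ _ (3 * B * q f)). { nra. }
  intros d Hd Hd1. specialize (Step d Hd Hd1). lra.
Qed.

Lemma frame_ext (H : HilbertSpace) (D : RiggedHilbertSpace H) hs A B : 0 < A -> 0 <= B ->
  (forall f N, FF H hs f N <= B * q f) ->
  (forall g, dom D g -> forall eps, 0 < eps -> exists N, A * q g - eps <= FF H hs g N) ->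
  forall f eps, 0 < eps -> exists N, A * q f - eps <= FF H hs f N.
Proof.
  intros HA HB Hbes Hlow f eps He.
  pose proof (q_nonneg H f) as Hqf.
  set (eta := Rmin 1 (eps / (9 * (B * q f + 1)))).
  assert (Het : 0 < eta) by (apply Rmin_pos; [lra|]; apply Rdiv_lt_0_compat; nra).
  assert (Het1 : eta <= 1) by apply Rmin_l.
  assert (Het2 : eta <= eps / (9 * (B * q f + 1))) by apply Rmin_r.
  set (P := 1 + / eta).
  assert (HP : 1 <= P) by (unfold P; pose proof (Rinv_0_lt_compat _ Het); lra).
  set (d := eps / (3 * P * (2 * B + A) + 1)).
  assert (Hd : 0 < d) by (apply Rdiv_lt_0_compat; nra).
  assert (Hdd : P * (2 * B + A) * d <= eps / 3).
  { unfold d. apply (Rmult_le_reg_l (3 * (3 * P * (2 * B + A) + 1))). nra.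
    field_simplify; [|nra]. nra. }
  destruct (dense_q H D f d Hd) as [g [Dg Qg]].
  assert (He6 : 0 < eps / 6) by lra.
  destruct (Hlow g Dg _ He6) as [N HN]. exists N.
  pose proof (FF_shift H hs g f eta N Het) as S1. fold P in S1.
  pose proof (Hbes (hsub g f) N) as S2. rewrite q_hsub_sym in S2.
  pose proof (q_sub_le H g f eta Het) as S3. fold P in S3. rewrite q_hsub_sym in S3.
  pose proof (Hbes f N) as S4.
  pose proof (q_nonneg H (hsub f g)) as Q0.
  set (Ff := FF H hs f N) in *. set (Fg := FF H hs g N) in *.
  set (Fd := FF H hs (hsub g f) N) in *. set (Qd := q (hsub f g)) in *.
  assert (T1' : Fd <= B * d) by (eapply Rle_trans; [exact S2|]; apply Rmult_le_compat_l; lra).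
  assert (T1 : P * Fd <= P * B * d) by (rewrite Rmult_assoc; apply Rmult_le_compat_l; lra).
  assert (T2' : P * Qd <= P * d) by (apply Rmult_le_compat_l; lra).
  assert (T2 : A * q f <= (1 + eta) * (A * q g) + P * A * d).
  { assert (A * q f <= A * ((1 + eta) * q g + P * d)) by (apply Rmult_le_compat_l; lra). nra. }
  assert (T3 : (1 + eta) * (A * q g) <= (1 + eta) * (Fg + eps / 6)) by (apply Rmult_le_compat_l; lra).
  assert (T4 : (1 + eta) * Fg <= (1 + eta) * ((1 + eta) * Ff + P * B * d)) by (apply Rmult_le_compat_l; lra).
  assert (Ff0 : 0 <= Ff) by (apply psum_nonneg; intros; unfold sq; nra).
  assert (T5 : (1 + eta) * (1 + eta) * Ff <= Ff + 3 * eta * (B * q f)).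
  { assert (eta * eta <= eta) by nra.
    assert ((2 * eta + eta * eta) * Ff <= (3 * eta) * (B * q f)) by (apply Rmult_le_compat; nra).
    nra. }
  assert (T6 : 3 * eta * (B * q f) <= eps / 3).
  { assert (Bq0 : 0 <= B * q f) by nra.
    assert (eta * (B * q f) <= (eps / (9 * (B * q f + 1))) * (B * q f + 1)) by (apply Rmult_le_compat; lra).
    assert (3 * (eps / (9 * (B * q f + 1))) * (B * q f + 1) = eps / 3) by (field; nra). lra. }
  assert (PBd : 0 <= P * B * d) by (apply Rmult_le_pos; [apply Rmult_le_pos|]; lra).
  assert (T7 : (1 + eta) * (P * B * d) <= 2 * (P * B * d)) by (apply Rmult_le_compat_r; lra).
  assert (T8 : (1 + eta) * (eps / 6) <= 2 * (eps / 6)) by (apply Rmult_le_compat_r; lra).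
  assert (E9 : P * (2 * B + A) * d = 2 * (P * B * d) + P * A * d) by ring.
  assert (E10 : (1 + eta) * ((1 + eta) * Ff + P * B * d) = (1 + eta) * (1 + eta) * Ff + (1 + eta) * (P * B * d)) by ring.
  assert (E11 : (1 + eta) * (Fg + eps / 6) = (1 + eta) * Fg + (1 + eta) * (eps / 6)) by ring.
  lra.
Qed.

Lemma psum_ext u v N : (forall n, u n = v n) -> psum u N = psum v N.
Proof. intros E. induction N. { reflexivity. } rewrite !psum_S, IHN, E. reflexivity. Qed.

Lemma bessel_part (H : HilbertSpace) (D : RiggedHilbertSpace H) omega B :
  bounded_Bessel_map D omega B ->
  exists h : nat -> H, represented_in_H D omega h /\ Bessel_seq h B.
Proof.
  intros [Hin [HB Hsum]].
  assert (bnd : forall n f, dom D f -> sq (omega n f) <= B * q f).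
  { intros n f Hf. pose proof (Hsum f Hf (S n)) as S.
    pose proof (term_le_psum (fun n => Cmod (Cconj (omega n f)) ^ 2) n (fun m => pow2_ge_0 _)) as T.
    cbv beta in T. rewrite Cmod_sq, sq_conj in T. rewrite hnorm_sq in S. lra. }
  assert (ex : forall n, exists h, forall f, dom D f -> omega n f = inner H h f).
  { intros n. apply (riesz H D (omega n) B); auto. { exact (proj1 (Hin n)). } lra. }
  set (hs := fun n => proj1_sig (constructive_indefinite_description _ (ex n))).
  assert (Hhs : forall n f, dom D f -> omega n f = inner H (hs n) f).
  { intros n. unfold hs. destruct constructive_indefinite_description; auto. }
  exists hs. split.
  - intros n. split.
    + exists (sqrt B). intros f Hf. unfold Cmod, hnorm. fold (q f).
      rewrite <- sqrt_mult_alt by lra. apply sqrt_le_1_alt. apply (bnd n f Hf).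
    + apply Hhs.
  - split; auto. intros f N.
    assert (Hg : forall g, dom D g -> forall N, FF H hs g N <= B * q g).
    { intros g Dg M. pose proof (Hsum g Dg M) as S. rewrite hnorm_sq in S.
      unfold FF. erewrite psum_ext; [exact S|]. intros n. cbv beta.
      rewrite Cmod_sq, sq_conj, (Hhs n g Dg), (inner_sym H g (hs n)), sq_conj. reflexivity. }
    pose proof (bessel_ext H D hs B (Rlt_le _ _ HB) Hg f N) as R1.
    unfold FF in R1. rewrite hnorm_sq. erewrite psum_ext; [exact R1|]. intros n. cbv beta.
    rewrite Cmod_sq. reflexivity.
Qed.

Theorem proposition2p7 (H : HilbertSpace) (D : RiggedHilbertSpace H) :
  reflexive D ->
  (forall (omega : nat -> H -> Cx) (B : R),
     bounded_Bessel_map D omega B ->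
     exists h : nat -> H, represented_in_H D omega h /\ Bessel_seq h B) /\
  (forall (omega : nat -> H -> Cx) (A B : R),
     distribution_frame D omega A B ->
     exists h : nat -> H, represented_in_H D omega h /\ frame_seq h A B).
Proof.
  intros _. split.
  - apply bessel_part.
  - intros omega A B [Hbm [HA Hlow]].
    destruct (bessel_part H D omega B Hbm) as [hs [Hrep [HB Hbes]]].
    exists hs. split; auto. split; [split; auto|]. split; auto.
    assert (Hbes' : forall f N, FF H hs f N <= B * q f).
    { intros f N. specialize (Hbes f N). rewrite hnorm_sq in Hbes. unfold FF.
      erewrite psum_ext; [exact Hbes|]. intros n. cbv beta. rewrite Cmod_sq. reflexivity. }
    assert (Hlow' : forall g, dom D g -> forall eps, 0 < eps -> exists N, A * q g - eps <= FF H hs g N).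
    { intros g Dg eps He. destruct (Hlow g Dg eps He) as [N HN]. exists N.
      rewrite hnorm_sq in HN. unfold FF. erewrite psum_ext; [exact HN|]. intros n. cbv beta.
      rewrite Cmod_sq, sq_conj, (proj2 (Hrep n) g Dg), (inner_sym H g (hs n)), sq_conj. reflexivity. }
    intros f eps He. destruct (frame_ext H D hs A B HA (Rlt_le _ _ HB) Hbes' Hlow' f eps He) as [N HN].
    exists N. rewrite hnorm_sq. unfold FF in HN. erewrite psum_ext; [exact HN|]. intros n. cbv beta.
    rewrite Cmod_sq. reflexivity.
Qed.
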